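(* Let $A=[a_{ijk}]=[A_1,\ldots,A_n]$ be an $n\times n\times n$ PASHM and $L(A)=1A_1+2A_2+\cdots+nA_n=[l_{ij}]$. Then every row sum and every column sum of $L(A)$ equals $\binom{n+1}{2}$. If moreover $A$ is an ASHM, then: (i) every entry of $L(A)$ lies in $\{1,\ldots,n\}$, and the first and last rows and the first and last columns of $L(A)$ are permutations of $1,2,\ldots,n$; (ii) fix $i,j$ and let $1\le k_1<k_2<\cdots<k_p\le n$ ($p\ge1$) be the indices $k$ with $a_{ijk}\neq 0$. Let $r=l_{ij}$. Then (iia) $k_1\le r$ and $p\le 2r-1$; moreover $k_1=r$ implies $p=1$; in particular, if $l_{ij}=1$ then $a_{ij1}=1$ and $a_{ijk}=0$ for $1<k\le n$. (iib) $p\le 2(n-r)+1$; in particular, if $l_{ij}=n$ then $a_{ijn}=1$ and $a_{ijk}=0$ for $1\le k<n$.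
   Context: An $n\times n$ alternating sign matrix (ASM) is an $n\times n$ matrix with entries in $\{0,1,-1\}$ such that in every row and column the nonzeros alternate in sign, beginning and ending with $+1$. An $n\times n\times n$ hypermatrix $A=[a_{ijk}]$ is written $A=[A_1,\ldots,A_n]$ with $A_k=[a_{ijk}]_{i,j}$ its $k$-th horizontal plane; its vertical lines are $(a_{ijk})_{k=1}^n$ for fixed $i,j$. $A$ is a planar alternating sign hypermatrix (PASHM) if each horizontal plane $A_k$ is an ASM and each vertical line sums to $1$. $A$ is an alternating sign hypermatrix (ASHM) if all entries lie in $\{0,\pm1\}$ and in every line (fixing any two of the three indices) the nonzeros alternate in sign beginning and ending with $+1$; every ASHM is a PASHM. *)

(* Defs.v *)
(* Hypermatrices are functions 'I_n -> 'I_n -> 'I_n -> int;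
   index k : 'I_n stands for the paper's index k+1. *)
From mathcomp Require Import all_boot all_order all_algebra.
Set Implicit Arguments. Unset Strict Implicit. Unset Printing Implicit Defensive.
Import Order.TTheory GRing.Theory Num.Theory.
Local Open Scope ring_scope.

Definition hypermatrix (n : nat) := 'I_n -> 'I_n -> 'I_n -> int.

Definition alt_line (s : seq int) : bool :=
  all (fun x => x \in [:: 0; 1; -1]) s &&
  (let t := [seq x <- s | x != 0] in
   odd (size t) && (t == mkseq (fun i => (-1) ^+ i) (size t))).

Definition is_ASM (n : nat) (M : 'I_n -> 'I_n -> int) : bool :=
  [forall i : 'I_n, alt_line [seq M i j | j <- enum 'I_n]] &&
  [forall j : 'I_n, alt_line [seq M i j | i <- enum 'I_n]].

Definition is_PASHM (n : nat) (A : hypermatrix n) : Prop :=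
  (forall k : 'I_n, is_ASM (fun i j => A i j k)) /\
  (forall i j : 'I_n, \sum_(k < n) A i j k = 1).

Definition is_ASHM (n : nat) (A : hypermatrix n) : Prop :=
  (forall j k : 'I_n, alt_line [seq A i j k | i <- enum 'I_n]) /\
  (forall i k : 'I_n, alt_line [seq A i j k | j <- enum 'I_n]) /\
  (forall i j : 'I_n, alt_line [seq A i j k | k <- enum 'I_n]).

Definition LA (n : nat) (A : hypermatrix n) (i j : 'I_n) : int :=
  \sum_(k < n) (k.+1)%:Z * A i j k.

Definition nz_count (n : nat) (A : hypermatrix n) (i j : 'I_n) : nat :=
  #|[pred k : 'I_n | A i j k != 0]|.

(* Main.v *)
Require Import Defs.
From mathcomp Require Import all_boot all_order all_algebra.
From mathcomp Require Import zify ring lra.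
Set Implicit Arguments. Unset Strict Implicit. Unset Printing Implicit Defensive.
Import Order.TTheory GRing.Theory Num.Theory.
Local Open Scope ring_scope.

Fixpoint ok (b : bool) (s : seq int) : bool :=
  match s with
  | [::] => b
  | x :: s' => if b then ((x == 0) && ok true s') || ((x == -1) && ok false s')
               else ((x == 0) && ok false s') || ((x == 1) && ok true s')
  end.

Fixpoint w (s : seq int) : int :=
  if s is x :: s' then x + \sum_(y <- s') y + w s' else 0.

Definition pz (s : seq int) : nat := count (fun x => x != 0) s.
Lemma pz_cons x s : pz (x :: s) = ((x != 0) + pz s)%N. Proof. by []. Qed.
Lemma pz_nil : pz [::] = 0%N. Proof. by []. Qed.
Arguments pz : simpl never.

Definition bz (b : bool) : int := if b then 0 else 1.

Lemma ok_sum b s : ok b s -> \sum_(y <- s) y = bz b.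
Proof.
elim: s b => [|x s IH] [] /=; rewrite ?big_nil ?big_cons //.
- case/orP=> /andP[/eqP -> H]; rewrite (IH _ H) /bz; lia.
- case/orP=> /andP[/eqP -> H]; rewrite (IH _ H) /bz; lia.
Qed.

Lemma ok_c b s : ok b s ->
  (pz s)%:Z + bz b <= 2 * w s /\
  (pz s)%:Z <= 2 * ((size s)%:Z - w s) + bz b.
Proof.
elim: s b => [|x s IH] [] /=; rewrite ?pz_nil ?pz_cons /bz //.
- case/orP=> /andP[/eqP -> H]; have := IH _ H; have := ok_sum H;
  rewrite /bz /= => -> ; rewrite PoszD; lia.
- case/orP=> /andP[/eqP -> H]; have := IH _ H; have := ok_sum H;
  rewrite /bz /= => -> ; rewrite PoszD; lia.
Qed.

Lemma ok_prefix m s : ok false s -> (forall i, (i < m)%N -> nth 0 s i = 0) ->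
  (m.+1)%:Z <= w s /\ (w s = (m.+1)%:Z -> pz s = 1%N).
Proof.
elim: m s => [|m IH] [|x s] //=.
- move=> H _; case/orP: H=> /andP[/eqP -> H].
  + have [H1 _] := ok_c H; have := ok_sum H; rewrite /bz /= in H1 * => ->.
    split; first lia. move=> E; exfalso; lia.
  + have [H1 _] := ok_c H; have := ok_sum H; rewrite /bz /= in H1 * => ->.
    split; first lia. move=> E. rewrite pz_cons /=. lia.
- move=> H Hz; have x0 : x = 0 by apply: (Hz 0%N).
  move: H; rewrite x0 /= => /orP[H|//].
  have [] := IH s H (fun i Hi => Hz i.+1 Hi).
  have := ok_sum H; rewrite /bz pz_cons /= => -> H1 H2; split; first lia.
  move=> E; apply: H2; lia.
Qed.

Lemma pz0_nth s : pz s = 0%N -> forall i, nth 0 s i = 0.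
Proof.
elim: s => [|x s IH] //= H i; first by rewrite nth_nil.
move: H; rewrite pz_cons; case: eqP => [-> /= H|//].
by case: i => [|i] //=; apply: IH.
Qed.

Lemma pz0_w s : pz s = 0%N -> w s = 0 /\ \sum_(y <- s) y = 0.
Proof.
elim: s => [|x s IH]; first by rewrite big_nil.
rewrite pz_cons /= big_cons; case: eqP => [-> /= H|//].
by have [-> ->] := IH H; rewrite !addr0.
Qed.

Lemma ok_w1 s : ok false s -> w s = 1 -> forall i, nth 0 s i = if i == 0%N then 1 else 0.
Proof.
case: s => [|x s] //= /orP[/andP[/eqP -> H]|/andP[/eqP -> H]].
- have [H1 _] := ok_c H; have := ok_sum H; rewrite /bz /= in H1 * => ->; lia.
- have [H1 _] := ok_c H; have := ok_sum H; rewrite /bz /= in H1 * => -> E.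
  have Hp : pz s = 0%N by lia.
  by case=> [|i] //=; apply: pz0_nth.
Qed.

Lemma ok_wn b s : ok b s -> w s = (size s)%:Z - (if b then size s else 0%N)%:Z ->
  forall i, nth 0 s i = if b then 0 else if i == (size s).-1 then 1 else 0.
Proof.
elim: s b => [|x s IH] [] //=.
- by move=> _ _ i; rewrite nth_nil.
- case/orP=> /andP[/eqP -> H].
  + have := ok_sum H; rewrite /bz => -> E; case=> [|i] //=.
    apply: (IH true H); lia.
  + have := ok_sum H; rewrite /bz => -> E.
    have [H1 _] := ok_c H; rewrite /bz /= in H1; lia.
- case/orP=> /andP[/eqP -> H].
  + have := ok_sum H; rewrite /bz => -> E.
    have Hs : (0 < size s)%N by case: (s) H.
    have IH' := IH false H.
    case=> [|i] /=; first by case: (size s) Hs.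
    rewrite IH'; last lia. by case: (size s) Hs.
  + have := ok_sum H; rewrite /bz => -> E.
    have [_ H2] := ok_c H; rewrite /bz /= in H2.
    have Hp : pz s = 0%N by lia.
    have [Hw _] := pz0_w Hp.
    have Hs0 : size s = 0%N by lia.
    by case: s H Hs0 {IH E H2 Hp Hw} => // _ _; case=> [|i] //=; rewrite nth_nil.
Qed.

Definition is01 (x : int) := (x == 0) || (x == 1).

Lemma ok_first s : ok false s -> is01 (nth 0 s 0).
Proof. by case: s => [|x s] //= /orP[/andP[/eqP -> _]|/andP[/eqP -> _]]. Qed.

Lemma ok_cons b x s : ok b (x :: s) -> exists b', ok b' s.
Proof. by case: b => /= /orP[/andP[_ H]|/andP[_ H]]; eexists; exact H. Qed.

Lemma ok_last_aux s : forall x b, ok b (x :: s) -> is01 (last x s).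
Proof.
elim: s => [|y s IH] x b.
- by case: b => /= /orP[/andP[/eqP -> H]|/andP[/eqP -> H]].
- by move=> /ok_cons [b' H']; exact: IH H'.
Qed.

Lemma ok_last b s : ok b s -> is01 (nth 0 s (size s).-1).
Proof.
rewrite nth_last; case: s => [|x s] H; first by case: b H.
exact: ok_last_aux H.
Qed.

Lemma ok01_pz b s : ok b s -> all is01 s -> pz s = (if b then 0 else 1)%N.
Proof.
elim: s b => [|x s IH] [] //=.
- case/orP=> /andP[/eqP -> H] /andP[H0 Ha]; rewrite pz_cons (IH _ H Ha) //.
- case/orP=> /andP[/eqP -> H] /andP[H0 Ha]; rewrite pz_cons (IH _ H Ha) //.
Qed.

Fixpoint alt (b : bool) (t : seq int) : bool :=
  match t with
  | [::] => b
  | x :: t' => if b then (x == -1) && alt false t' else (x == 1) && alt true t'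
  end.

Lemma mkseq_cons (T : Type) (f : nat -> T) n : mkseq f n.+1 = f 0%N :: mkseq (fun i => f i.+1) n.
Proof. by rewrite /mkseq /= -[1%N]/(1 + 0)%N iotaDl -map_comp. Qed.

Lemma altA t : forall b : bool,
  (odd (size t + b) && (t == mkseq (fun i => (-1) ^+ (i + b)%N) (size t))) = alt b t.
Proof.
elim: t => [|x t IH] b; first by case: b.
rewrite /= mkseq_cons eqseq_cons.
case: b; rewrite /= ?addn0 ?addn1 ?expr1 ?expr0.
- rewrite -(IH false) /= negbK addn0.
  have -> : mkseq (fun i : nat => (-1) ^+ (i.+1 + 1)%N) (size t) = mkseq (fun i => (-1) ^+ (i + 0)%N) (size t) :> seq int.
    by apply: eq_mkseq => i; rewrite addn0 addn1 exprS exprS mulrA mulrNN mulr1 mul1r.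
  by rewrite andbCA.
- rewrite -(IH true) /=.
  have -> : mkseq (fun i : nat => (-1) ^+ (i.+1 + 0)%N) (size t) = mkseq (fun i => (-1) ^+ (i + 1)%N) (size t) :> seq int.
    by apply: eq_mkseq => i; rewrite addn0 addn1.
  by rewrite addn1 andbCA.
Qed.

Lemma okB s : forall b, ok b s = all (fun x => x \in [:: 0; 1; -1]) s && alt b [seq x <- s | x != 0].
Proof.
elim: s => [|x s IH] b /=; first by case: b.
rewrite !IH.
have [->|x0] := eqVneq x 0; first by case: b; rewrite /= ?orbF.
have [->|x1] := eqVneq x 1; first by case: b; rewrite /= ?orbF ?andbF.
have [->|x2] := eqVneq x (-1); first by case: b; rewrite /= ?orbF ?andbF.
rewrite !inE (negbTE x0) (negbTE x1) (negbTE x2) /=.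
by case: b; rewrite /= ?(negbTE x0) ?(negbTE x1) ?(negbTE x2) /= ?andbF.
Qed.
From mathcomp Require Import all_boot all_order all_algebra.
From mathcomp Require Import zify ring lra.
Set Implicit Arguments. Unset Strict Implicit. Unset Printing Implicit Defensive.
Import Order.TTheory GRing.Theory Num.Theory.
Local Open Scope ring_scope.

Lemma alt_ok s : alt_line s = ok false s.
Proof.
rewrite okB -altA /alt_line addn0.
have -> : mkseq (fun i => (-1)^+(i + false)%N) (size [seq x <- s | x != 0]) = mkseq (fun i => (-1)^+i) (size [seq x <- s | x != 0]) :> seq int.
  by apply: eq_mkseq => i; rewrite addn0.
by [].
Qed.

Lemma cardc n (F : 'I_n -> int) : #|[pred k : 'I_n | F k != 0]| = pz [seq F k | k <- enum 'I_n].
Proof. rewrite /pz count_map cardE /enum_mem size_filter. by rewrite filter_predT. Qed.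

Lemma sume n (F : 'I_n -> int) : \sum_(k < n) F k = \sum_(y <- [seq F k | k <- enum 'I_n]) y.
Proof. by rewrite big_map big_enum. Qed.

Lemma LAw n (F : 'I_n -> int) : \sum_(k < n) (k.+1)%:Z * F k = w [seq F k | k <- enum 'I_n].
Proof.
elim: n F => [|n IH] F; first by rewrite big_ord0 enum_ord0.
rewrite big_ord_recl enum_ordSl /= -map_comp -(IH (F \o lift ord0)) -sume.
rewrite mul1r -addrA -big_split /=; congr (_ + _); apply: eq_bigr => i _ /=.
have -> : ((bump 0 i).+1)%:Z = (i.+1)%:Z + 1 by rewrite /bump /=; lia.
by rewrite mulrDl mul1r addrC.
Qed.

Lemma nth_line n (F : 'I_n -> int) m (Hm : (m < n)%N) :
  nth 0 [seq F k | k <- enum 'I_n] m = F (Ordinal Hm).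
Proof.
rewrite (nth_map (Ordinal Hm)) ?size_enum_ord //; congr F; apply: val_inj.
by rewrite /= nth_enum_ord.
Qed.

Lemma nth_line' n (F : 'I_n -> int) (k : 'I_n) :
  nth 0 [seq F k | k <- enum 'I_n] k = F k.
Proof. by rewrite nth_line; congr F; apply: val_inj. Qed.

Lemma sumk n : \sum_(k < n) (k.+1)%:Z * 1 = ('C(n.+1, 2))%:Z.
Proof.
elim: n => [|n IH]; first by rewrite big_ord0.
rewrite big_ord_recr /= IH mulr1 -PoszD; congr Posz; by rewrite (binS n.+1 1) bin1 addnC.
Qed.

Lemma permL n (G : 'I_n -> 'I_n -> int) : (forall j k, is01 (G j k)) ->
  (forall j, ok false [seq G j k | k <- enum 'I_n]) ->
  (forall k, ok false [seq G j k | j <- enum 'I_n]) ->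
  perm_eq [seq \sum_(k < n) (k.+1)%:Z * G j k | j <- enum 'I_n] [seq (k%:Z) | k <- iota 1 n].
Proof.
move=> H01 Hj Hk.
have c1 j : #|[pred k | G j k != 0]| = 1%N.
  rewrite cardc (ok01_pz (Hj j)) //; rewrite all_map; apply/allP => k _ /=; exact: H01.
have c2 k : #|[pred j | G j k != 0]| = 1%N.
  rewrite (cardc (fun j => G j k)) (ok01_pz (Hk k)) //; rewrite all_map; apply/allP => j _ /=; exact: H01.
pose sg j := sval (mem_card1 (c1 j)).
pose tau k := sval (mem_card1 (c2 k)).
have Hs j k : (G j k != 0) = (k == sg j).
  by have := proj2_sig (mem_card1 (c1 j)) k; rewrite !inE.
have Ht j k : (G j k != 0) = (j == tau k).
  by have := proj2_sig (mem_card1 (c2 k)) j; rewrite !inE.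
have G1 j : G j (sg j) = 1.
  have := H01 j (sg j); have := Hs j (sg j); rewrite eqxx /is01.
  by case: eqP => //= _ _ /eqP.
have LAj j : \sum_(k < n) (k.+1)%:Z * G j k = (sg j).+1%:Z.
  rewrite (bigD1 (sg j)) //= G1 mulr1 big1 ?addr0 // => k Hk'.
  have := Hs j k; rewrite (negbTE Hk') => /negbFE/eqP ->; rewrite mulr0 //.
have inj_sg : injective sg.
  move=> j1 j2 E.
  have h1 : G j1 (sg j1) != 0 by rewrite Hs.
  have h2 : G j2 (sg j1) != 0 by rewrite E Hs.
  rewrite Ht in h1; rewrite Ht in h2.
  by rewrite (eqP h1) (eqP h2).
have Pe : perm_eq [seq sg j | j <- enum 'I_n] (enum 'I_n).
  apply: uniq_perm; first by rewrite (map_inj_uniq inj_sg) enum_uniq.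
    exact: enum_uniq.
  move=> x; rewrite mem_enum; apply/mapP; exists (tau x); first by rewrite mem_enum.
  by apply/eqP; rewrite -Hs Ht.
rewrite (eq_map LAj).
have -> : [seq (k%:Z) | k <- iota 1 n] = [seq (k.+1)%:Z | k <- [seq val k | k <- enum 'I_n]] :> seq int.
  by rewrite val_enum_ord -[1%N]/(1 + 0)%N iotaDl -map_comp.
have := perm_map (fun k : 'I_n => ((val k).+1)%:Z) Pe.
by rewrite -!map_comp.
Qed.

Lemma line_ok n (F : 'I_n -> int) : alt_line [seq F k | k <- enum 'I_n] -> ok false [seq F k | k <- enum 'I_n].
Proof. by rewrite alt_ok. Qed.

Lemma line_sum n (F : 'I_n -> int) : alt_line [seq F k | k <- enum 'I_n] -> \sum_(k < n) F k = 1.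
Proof. by move/line_ok/ok_sum; rewrite sume. Qed.

Lemma line_end n (F : 'I_n -> int) (i0 : 'I_n) : alt_line [seq F k | k <- enum 'I_n] ->
  val i0 = 0%N \/ val i0 = n.-1 -> is01 (F i0).
Proof.
move/line_ok => H [] E; rewrite -nth_line' E.
- exact: ok_first H.
- by have := ok_last H; rewrite size_map size_enum_ord.
Qed.

Theorem mainTheorem3 (n : nat) (A : hypermatrix n) :
  is_PASHM A ->
  ((forall i : 'I_n, \sum_(j < n) LA A i j = ('C(n.+1, 2))%:Z) /\
   (forall j : 'I_n, \sum_(i < n) LA A i j = ('C(n.+1, 2))%:Z)) /\
  (is_ASHM A ->
   ((forall i j : 'I_n, 1 <= LA A i j <= n%:Z) /\
    (forall i : 'I_n, val i = 0%N \/ val i = n.-1 ->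
       perm_eq [seq LA A i j | j <- enum 'I_n] [seq (k%:Z) | k <- iota 1 n]) /\
    (forall j : 'I_n, val j = 0%N \/ val j = n.-1 ->
       perm_eq [seq LA A i j | i <- enum 'I_n] [seq (k%:Z) | k <- iota 1 n])) /\
   (forall i j : 'I_n,
      (forall k1 : 'I_n, A i j k1 != 0 ->
         (forall k : 'I_n, (k < k1)%N -> A i j k = 0) ->
         (k1.+1)%:Z <= LA A i j /\
         (LA A i j = (k1.+1)%:Z -> nz_count A i j = 1%N)) /\
      (nz_count A i j)%:Z <= 2 * LA A i j - 1 /\
      (LA A i j = 1 -> forall k : 'I_n, A i j k = (if val k == 0%N then 1 else 0)) /\
      (nz_count A i j)%:Z <= 2 * (n%:Z - LA A i j) + 1 /\
      (LA A i j = n%:Z -> forall k : 'I_n, A i j k = (if val k == n.-1 then 1 else 0)))).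
Proof.
move=> [Hpl _].
have Hr i k : alt_line [seq A i j k | j <- enum 'I_n].
  by have /andP[/forallP H _] := Hpl k; exact: H.
have Hc j k : alt_line [seq A i j k | i <- enum 'I_n].
  by have /andP[_ /forallP H] := Hpl k; exact: H.
split.
  split.
  - move=> i; rewrite /LA exchange_big /= -(sumk n); apply: eq_bigr => k _.
    by rewrite -mulr_sumr (line_sum (Hr i k)).
  - move=> j; rewrite /LA exchange_big /= -(sumk n); apply: eq_bigr => k _.
    by rewrite -mulr_sumr (line_sum (Hc j k)).
move=> [Hcol [Hrow Hv]].
have key i j : ok false [seq A i j k | k <- enum 'I_n] by apply: line_ok.
have HLA i j : LA A i j = w [seq A i j k | k <- enum 'I_n] by rewrite /LA LAw.
have Hnz i j : nz_count A i j = pz [seq A i j k | k <- enum 'I_n] by rewrite /nz_count cardc.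
have Hsz i j : size [seq A i j k | k <- enum 'I_n] = n by rewrite size_map size_enum_ord.
split; [split; [|split]|].
- move=> i j; have [c1 c2] := ok_c (key i j).
  rewrite /bz /= Hsz -HLA -Hnz in c1 c2; apply/andP; split; lia.
- move=> i0 Hi0; apply: permL.
  + by move=> j k; apply: (line_end (Hcol j k)).
  + by move=> j; apply: key.
  + by move=> k; apply: line_ok.
- move=> j0 Hj0; apply: permL.
  + by move=> i k; apply: (line_end (Hrow i k)).
  + by move=> i; apply: key.
  + by move=> k; apply: line_ok.
move=> i j; have [c1 c2] := ok_c (key i j).
rewrite /bz /= Hsz -HLA -Hnz in c1 c2.
split; [|split; [lia|split; [|split; [lia|]]]].
- move=> k1 _ Hk.
  have := ok_prefix (m := k1) (key i j).
  rewrite -HLA -Hnz; apply => m Hm.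
  have Hmn : (m < n)%N := ltn_trans Hm (ltn_ord k1).
  by rewrite (nth_line _ Hmn); apply: Hk.
- move=> E k; rewrite -nth_line'; apply: ok_w1 (key i j) _ _; rewrite -HLA //.
- move=> E k; rewrite -nth_line'.
  have := ok_wn (key i j); rewrite Hsz -HLA E subr0; apply => //.
Qed.
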